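(* Let $R$ be a reflexive relation on $U$. For every $(A,B)\in\mathrm{DM(RS)}$, $(A,B)=\bigvee\{(\{a\}^{\vartriangle\blacktriangledown},\{a\}^{\vartriangle\blacktriangle})\mid a\in A\}\ \vee\ \bigvee\{(\{b\}^{\blacktriangledown},\{b\}^{\blacktriangle})\mid b\in B^{\triangledown}\}$, joins taken in $\mathrm{DM(RS)}$.
   Context: Let $U$ be a set and $R\subseteq U\times U$ a binary relation. For $x\in U$, $R(x)=\{y\in U\mid (x,y)\in R\}$ and $\breve R(x)=\{y\in U\mid (y,x)\in R\}$. For $X\subseteq U$: $X^{\blacktriangledown}=\{x\in U\mid R(x)\subseteq X\}$, $X^{\blacktriangle}=\{x\in U\mid R(x)\cap X\neq\emptyset\}$, $X^{\triangledown}=\{x\in U\mid \breve R(x)\subseteq X\}$, $X^{\vartriangle}=\{x\in U\mid \breve R(x)\cap X\neq\emptyset\}$; composites like $X^{\vartriangle\blacktriangledown}$ mean $(X^{\vartriangle})^{\blacktriangledown}$. $\wp(U)^{\blacktriangledown}=\{X^{\blacktriangledown}\mid X\subseteq U\}$, $\wp(U)^{\blacktriangle}=\{X^{\blacktriangle}\mid X\subseteq U\}$. $\mathcal S=\{x\in U\mid |R(x)|=1\}$. $\mathrm{RS}=\{(X^{\blacktriangledown},X^{\blacktriangle})\mid X\subseteq U\}$ ordered coordinatewise; $\mathrm{DM(RS)}$ is its Dedekind–MacNeille completion, identified with $\{(A,B)\in\wp(U)^{\blacktriangledown}\times\wp(U)^{\blacktriangle}\mid A^{\vartriangle\blacktriangle}\subseteq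 B,\ A\cap\mathcal S=B\cap\mathcal S\}$ ordered coordinatewise, with meets $\bigwedge_i(X_i,Y_i)=(\bigcap_iX_i,(\bigcap_iY_i)^{\triangledown\blacktriangle})$ and joins $\bigvee_i(X_i,Y_i)=((\bigcup_iX_i)^{\vartriangle\blacktriangledown},\bigcup_iY_i)$. *)

(* Defs.v *)
From mathcomp Require Import all_boot.
From mathcomp Require Import boolp classical_sets.
Set Implicit Arguments. Unset Strict Implicit. Unset Printing Implicit Defensive.
Local Open Scope classical_set_scope.

Section RoughDefs.
Variables (U : Type) (R : U -> U -> Prop).

Definition Rimg (x : U) : set U := [set y | R x y].
Definition Rcon (x : U) : set U := [set y | R y x].

(* X^▼, X^▲, X^▽, X^△ *)
Definition boxR (X : set U) : set U := [set x | Rimg x `<=` X].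
Definition diaR (X : set U) : set U := [set x | Rimg x `&` X !=set0].
Definition boxC (X : set U) : set U := [set x | Rcon x `<=` X].
Definition diaC (X : set U) : set U := [set x | Rcon x `&` X !=set0].

Definition singR : set U := [set x | exists y, Rimg x = [set y]].

(* (A,B) ∈ DM(RS), in the paper's identification *)
Definition inDM (A B : set U) : Prop :=
  [/\ exists X, A = boxR X,
      exists Y, B = diaR Y,
      diaR (diaC A) `<=` B
    & A `&` singR = B `&` singR].

Definition DMjoin (F : set (set U * set U)) : set U * set U :=
  (boxR (diaC (\bigcup_(p in F) p.1)), \bigcup_(p in F) p.2).

Definition DMjoin2 (p q : set U * set U) : set U * set U :=
  DMjoin [set p; q].
End RoughDefs.

(* Main.v *)
Require Import Defs.
From mathcomp Require Import all_boot.
From mathcomp Require Import boolp classical_sets.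
Local Open Scope classical_set_scope.

Theorem mainTheorem14 (U : Type) (R : U -> U -> Prop)
  (Rrefl : forall x, R x x) (A B : set U) :
  inDM R A B ->
  (A, B) =
  DMjoin2 R
    (DMjoin R [set p | exists2 a, A a &
        p = (boxR R (diaC R [set a]), diaR R (diaC R [set a]))])
    (DMjoin R [set p | exists2 b, boxC R B b &
        p = (boxR R [set b], diaR R [set b])]).
Proof.
case=> [[X ->] [Y ->] Hsub HS].
rewrite /DMjoin2 /DMjoin.
have bdA : forall Z, Z `<=` boxR R X -> boxR R (diaC R Z) `<=` boxR R X.
  move=> Z HZ x Hx y Hy.
  have [z [Rzy Zz]] := Hx y Hy.
  exact: (HZ z Zz y Rzy).
have bd1 : boxR R (diaC R (\bigcup_(p in [set p | exists2 a, boxR R X a &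
        p = (boxR R (diaC R [set a]), diaR R (diaC R [set a]))]) p.1)) `<=` boxR R X.
  apply: (bdA) => x [p [a Aa ->]] /= Hx.
  apply: (bdA [set a]) Hx => _ -> //.
have bd2 : boxR R (diaC R (\bigcup_(p in [set p | exists2 b, boxC R (diaR R Y) b &
        p = (boxR R [set b], diaR R [set b])]) p.1)) `<=` boxR R X.
  apply: (bdA) => x [p [b Bb ->]] /= Hx.
  have xb : x = b by apply: Hx; apply: Rrefl.
  subst x.
  have Bb' : diaR R Y b by apply: Bb; apply: Rrefl.
  have : (diaR R Y `&` singR R) b.
    split => //; exists b; apply/seteqP; split => z /=.
      by move=> Rbz; apply: Hx.
    by move=> ->; apply: Rrefl.
  by rewrite -HS => -[].
congr pair.
  apply/seteqP; split => x /=.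
    move=> Ax y Rxy; exists x; split => //.
    exists (boxR R (diaC R (\bigcup_(p in [set p | exists2 a, boxR R X a &
        p = (boxR R (diaC R [set a]), diaR R (diaC R [set a]))]) p.1)),
      \bigcup_(p in [set p | exists2 a, boxR R X a &
        p = (boxR R (diaC R [set a]), diaR R (diaC R [set a]))]) p.2).
      by left.
    move=> /= y' Rxy'; exists x; split => //.
    exists (boxR R (diaC R [set x]), diaR R (diaC R [set x])).
      by exists x.
    by move=> /= y'' Rxy''; exists x.
  apply: (bdA) => z [p [->|->]] /=; [exact: bd1|exact: bd2].
apply/seteqP; split => x /=.
  move=> [y [Rxy Yy]].
  exists (boxR R (diaC R (\bigcup_(p in [set p | exists2 b, boxC R (diaR R Y) b &
        p = (boxR R [set b], diaR R [set b])]) p.1)),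
      \bigcup_(p in [set p | exists2 b, boxC R (diaR R Y) b &
        p = (boxR R [set b], diaR R [set b])]) p.2).
    by right.
  exists (boxR R [set y], diaR R [set y]).
    exists y => //= z Rzy; exists y; split => //.
  by exists y.
move=> [q [->|->]] /= [p [a Aa ->]] /= [y [Rxy Hy]].
  apply: Hsub; exists y; split => //.
  case: Hy => z [Rzy za]; exists z; split => //; by rewrite za.
rewrite Hy in Rxy; exact: Aa Rxy.
Qed.
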